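(* Consider the generalized ScBM-VHAR model with fixed $1<b_M<b_L$, sample size $T$, $N=T-b_L$, satisfying (S1) $\det(I_q-\sum_{h=1}^{b_L}\Phi_hz^h)\ne0$ for $|z|\le1$ and (S2) $\|\Phi_h\|\le\phi_h$, $\phi_h\ge0$, $\sum_h\phi_h<1$. Let $\beta_V^*=\mathrm{vec}(B)\in\mathbb R^{3q^2}$ and $$\hat\beta_V=\arg\min_{\beta\in\mathbb R^{3q^2}}\Bigl\{\tfrac1N\|\mathrm{vec}(Z)-(I_q\otimes X_e)\beta\|_2^2+\lambda_{N,V}\|\beta\|_1\Bigr\}.$$ Assume: (i) $\beta_V^*$ is $\ell_V$-sparse; (ii) $\hat\Gamma_V:=N^{-1}(I_q\otimes(X_e'X_e))$ satisfies the restricted eigenvalue condition $\theta'\hat\Gamma_V\theta\ge\alpha_{R,V}\|\theta\|_2^2-\tau_{R,V}\|\theta\|_1^2$ for all $\theta$, with $\alpha_{R,V}>0$, $\tau_{R,V}\ge0$ and $\ell_V\le\alpha_{R,V}/(32\tau_{R,V})$; (iii) with $\hat\gamma_V:=N^{-1}(I_q\otimes X_e')\mathrm{vec}(Z)$, $\|\hat\gamma_V-\hat\Gamma_V\beta_V^*\|_\infty\le\lambda_{N,V}/4$ with probability tending to one, for $\lambda_{N,V}\asymp\sqrt{\log(sq)/N}$, $s=3$. Let $\hat\Phi^{\mathrm{lasso}}$ be the stacked horizon-specific coefficient matrix corresponding to $\hat\beta_V$. Then, with $s=3$, $$\|\hat\Phi^{\mathrm{lasso}}-\Phi\|=\mathcal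 O_{\mathbb P}(\sqrt{\ell_V}\lambda_{N,V})=\mathcal O_{\mathbb P}\Bigl(\sqrt{\ell_V\log(sq)/N}\Bigr).$$
   Context: Generalized ScBM-VHAR model: $Y_t=\Phi_{(S)}Y_{t-1}^{(S)}+\Phi_{(M)}Y_{t-1}^{(M)}+\Phi_{(L)}Y_{t-1}^{(L)}+\varepsilon_t$ with white noise, $Y_t^{(S)}=Y_t$, $Y_t^{(M)}=b_M^{-1}\sum_{h=0}^{b_M-1}Y_{t-h}$, $Y_t^{(L)}=b_L^{-1}\sum_{h=0}^{b_L-1}Y_{t-h}$, each $\Phi_{(h)}$ built from a weighted adjacency matrix of a random graph from a degree-corrected stochastic co-blockmodel. Implied VAR$(b_L)$ coefficients: $\Phi_1=\Phi_{(S)}+\Phi_{(M)}/b_M+\Phi_{(L)}/b_L$, $\Phi_2=\dots=\Phi_{b_M}=\Phi_{(M)}/b_M+\Phi_{(L)}/b_L$, $\Phi_{b_M+1}=\dots=\Phi_{b_L}=\Phi_{(L)}/b_L$. $Z=(Y_{b_L+1},\dots,Y_T)'\in\mathbb R^{N\times q}$; $X_e\in\mathbb R^{N\times3q}$ has rows $(Y_{t-1}^{(S)\prime},Y_{t-1}^{(M)\prime},Y_{t-1}^{(L)\prime})$; $B=[\Phi_{(S)}';\Phi_{(M)}';\Phi_{(L)}']\in\mathbb R^{3q\times q}$ so $Z=X_eB+E$. $\Phi$ denotes $B$ (the stacked horizon-specific matrix). $\|\cdot\|$ is the spectral norm. *)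

(* Defs.v *)
From HB Require Import structures.
From mathcomp Require Import all_boot all_order all_algebra.
From mathcomp Require Import all_classical all_reals all_analysis.
From mathcomp Require Import complex mxtens.

Set Implicit Arguments.
Unset Strict Implicit.
Unset Printing Implicit Defensive.

Import Order.TTheory GRing.Theory Num.Theory.
Local Open Scope classical_set_scope.
Local Open Scope ring_scope.

Section Defs.
Variable R : realType.

Definition norm2 {n} (v : 'cV[R]_n) : R := Num.sqrt (\sum_i v i 0 ^+ 2).
Definition norm1 {n} (v : 'cV[R]_n) : R := \sum_i `|v i 0|.
Definition norminf {n} (v : 'cV[R]_n) : R := \big[Num.max/0]_i `|v i 0|.

Definition spec_norm {m n} (A : 'M[R]_(m, n)) : R :=
  sup [set norm2 (A *m x) | x in [set x : 'cV[R]_n | norm2 x <= 1]].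

(* vec: column-major vectorisation (stack the columns); entry (i,j) of A
   sits at index j*m + i.  Kronecker product A (x) B is [tensmx A B]
   (entry (i*p+k, j*r+l) = A i j * B k l). *)
Definition vecm {m n} (A : 'M[R]_(m, n)) : 'cV[R]_(n * m) := (mxvec A^T)^T.

Definition har_avg {q} (b : nat) (Y : int -> 'cV[R]_q) (t : int) : 'cV[R]_q :=
  (b%:R)^-1 *: \sum_(h < b) Y (t - h%:Z).

Definition vhar_eq {q} (bM bL : nat) (PS PM PL : 'M[R]_q)
  (Y eps : int -> 'cV[R]_q) : Prop :=
  forall t : int, Y t = PS *m Y (t - 1) + PM *m har_avg bM Y (t - 1)
                       + PL *m har_avg bL Y (t - 1) + eps t.

(* implied VAR(b_L) coefficients Phi_h *)
Definition var_coef {q} (bM bL : nat) (PS PM PL : 'M[R]_q) (h : nat) : 'M[R]_q :=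
  if h == 1%N then PS + (bM%:R)^-1 *: PM + (bL%:R)^-1 *: PL
  else if (1 < h <= bM)%N then (bM%:R)^-1 *: PM + (bL%:R)^-1 *: PL
  else if (bM < h <= bL)%N then (bL%:R)^-1 *: PL
  else 0.

Definition cond_S1 {q} (bL : nat) (Phi : nat -> 'M[R]_q) : Prop :=
  forall z : R[i], `|z| <= 1 ->
    \det (1%:M - \sum_(1 <= h < bL.+1)
                   (z ^+ h) *: map_mx (fun x : R => (x%:C)%C) (Phi h)) != 0.

Definition cond_S2 {q} (bL : nat) (Phi : nat -> 'M[R]_q) : Prop :=
  exists phi : nat -> R,
    (forall h, 0 <= phi h) /\ \sum_(1 <= h < bL.+1) phi h < 1 /\
    (forall h, (1 <= h <= bL)%N -> spec_norm (Phi h) <= phi h).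

Definition white_noise d (Omega : measurableType d) (P : probability Omega R)
  {q} (eps : Omega -> int -> 'cV[R]_q) : Prop :=
  [/\ (forall t i, measurable_fun setT (fun w => eps w t i 0)),
      (forall t i, P.-integrable setT (fun w => ((eps w t i 0) ^+ 2)%:E)),
      (forall t i, (\int[P]_w (eps w t i 0)%:E = 0)%E),
      (forall t s i j, t != s ->
          (\int[P]_w (eps w t i 0 * eps w s j 0)%:E = 0)%E) &
      (forall t s i j, (\int[P]_w (eps w t i 0 * eps w t j 0)%:E
                      = \int[P]_w (eps w s i 0 * eps w s j 0)%:E)%E)].

Definition Zmat {q} (N bL : nat) (Y : int -> 'cV[R]_q) : 'M[R]_(N, q) :=
  \matrix_(i < N, j < q) Y (bL%:Z + 1 + i%:Z) j 0.

(* X_e : row i is (Y_{t-1}^{(S)'}, Y_{t-1}^{(M)'}, Y_{t-1}^{(L)'}) with t = b_L+1+i *)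
Definition Xe {q} (N bM bL : nat) (Y : int -> 'cV[R]_q) : 'M[R]_(N, q + q + q) :=
  row_mx (row_mx (\matrix_(i < N, j < q) Y (bL%:Z + i%:Z) j 0)
                 (\matrix_(i < N, j < q) har_avg bM Y (bL%:Z + i%:Z) j 0))
         (\matrix_(i < N, j < q) har_avg bL Y (bL%:Z + i%:Z) j 0).

Definition Bstack {q} (PS PM PL : 'M[R]_q) : 'M[R]_(q + q + q, q) :=
  col_mx (col_mx PS^T PM^T) PL^T.

Definition lasso_obj {q p} (N : nat) (Z : 'M[R]_(N, q)) (X : 'M[R]_(N, p))
  (lam : R) (beta : 'cV[R]_(q * p)) : R :=
  (N%:R)^-1 * norm2 (vecm Z - tensmx (1%:M : 'M[R]_q) X *m beta) ^+ 2
  + lam * norm1 beta.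

Definition is_lasso {q p} (N : nat) (Z : 'M[R]_(N, q)) (X : 'M[R]_(N, p))
  (lam : R) (beta : 'cV[R]_(q * p)) : Prop :=
  forall b : 'cV[R]_(q * p), lasso_obj Z X lam beta <= lasso_obj Z X lam b.

Definition Gamma_hat {q p} (N : nat) (X : 'M[R]_(N, p)) : 'M[R]_(q * p) :=
  (N%:R)^-1 *: tensmx (1%:M : 'M[R]_q) (X^T *m X).

Definition gamma_hat {q p} (N : nat) (Z : 'M[R]_(N, q)) (X : 'M[R]_(N, p))
  : 'cV[R]_(q * p) :=
  (N%:R)^-1 *: (tensmx (1%:M : 'M[R]_q) X^T *m vecm Z).

Definition nnz {n} (v : 'cV[R]_n) : nat := #|[set k : 'I_n | v k 0 != 0]|.

(* X_T = O_P(r_T): for every eps > 0 there are M > 0 and T0 such that for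
   T >= T0 the event {|X_T| <= M r_T} contains a measurable event of
   probability >= 1 - eps (inner-probability formulation). *)
Definition bigO_P d (Omega : measurableType d) (P : probability Omega R)
  (X : nat -> Omega -> R) (r : nat -> R) : Prop :=
  forall e : R, 0 < e -> exists M : R, 0 < M /\ exists T0 : nat,
    forall T, (T0 <= T)%N -> exists E : set Omega,
      [/\ measurable E, E `<=` [set w | `|X T w| <= M * r T] &
          ((1 - e)%:E <= P E)%E].

Definition wp_to_one d (Omega : measurableType d) (P : probability Omega R)
  (A : nat -> set Omega) : Prop :=
  forall e : R, 0 < e -> exists T0 : nat,
    forall T, (T0 <= T)%N -> exists E : set Omega,
      [/\ measurable E, E `<=` A T & ((1 - e)%:E <= P E)%E].

End Defs.

(* Main.v *)
Require Import Defs.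
From HB Require Import structures.
From mathcomp Require Import all_boot all_order all_algebra.
From mathcomp Require Import all_classical all_reals all_analysis.
From mathcomp Require Import complex mxtens.
From mathcomp Require Import ring lra zify.
Import Order.TTheory GRing.Theory Num.Theory.
Local Open Scope classical_set_scope.
Local Open Scope ring_scope.
Set Implicit Arguments.
Unset Strict Implicit.

Lemma cs_sum (R : realFieldType) (I : finType) (P : pred I) (a b : I -> R) :
  (\sum_(i | P i) a i * b i) ^+ 2 <=
  (\sum_(i | P i) a i ^+ 2) * (\sum_(i | P i) b i ^+ 2).
Proof.
set A := \sum_(i | P i) a i ^+ 2; set B := \sum_(i | P i) b i ^+ 2.
set C := \sum_(i | P i) a i * b i.
have H0 : 0 <= \sum_(i | P i) \sum_(j | P j) (a i * b j - a j * b i) ^+ 2.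
  by apply: sumr_ge0 => i _; apply: sumr_ge0 => j _; exact: sqr_ge0.
have E1 : forall i, \sum_(j | P j) (a i * b j - a j * b i) ^+ 2 =
     a i ^+ 2 * B + b i ^+ 2 * A - 2 * (a i * b i) * C.
  move=> i; rewrite /A /B /C !mulr_sumr -!big_split /= -sumrB.
  by apply: eq_bigr => j _; ring.
have E : \sum_(i | P i) \sum_(j | P j) (a i * b j - a j * b i) ^+ 2 =
   A * B + B * A - 2 * C * C.
  under eq_bigr do rewrite E1.
  rewrite sumrB big_split /= -!mulr_suml.
  by rewrite -mulr_sumr.
rewrite E in H0. rewrite -/C. nra.
Qed.

Lemma norminf_ge (R : realType) n (g : 'cV[R]_n) i : `|g i 0| <= norminf g.
Proof. rewrite /norminf. exact: (le_bigmax 0 (fun i => `|g i 0|) i). Qed.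

Lemma dot_le (R : realType) n (v g : 'cV[R]_n) :
  (v^T *m g) 0 0 <= norm1 v * norminf g.
Proof.
rewrite mxE /norm1 mulr_suml; apply: ler_sum => i _; rewrite mxE.
apply: (le_trans (ler_norm _)); rewrite normrM.
by apply: ler_wpM2l => //; exact: norminf_ge.
Qed.

Lemma core (R : realType) n (G : 'M[R]_n) (bs v g : 'cV[R]_n) (lam alpha tau k : R) :
  0 < alpha -> 0 <= tau -> 32 * tau * k <= alpha -> (0 < lam \/ n = 0%N) ->
  (nnz bs)%:R <= k ->
  0 <= (v^T *m G *m v) 0 0 ->
  (v^T *m G *m v) 0 0 - 2 * (v^T *m g) 0 0 + lam * (norm1 (bs + v) - norm1 bs) <= 0 ->
  norminf g <= lam / 4 ->
  alpha * norm2 v ^+ 2 - tau * norm1 v ^+ 2 <= (v^T *m G *m v) 0 0 ->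
  norm2 v <= 3 / alpha * Num.sqrt k * lam.
Proof.
move=> ha ht htk [hl|hn]; last first.
  subst n => _ _ _ hg _.
  have -> : norm2 v = 0 by rewrite /norm2 big_ord0 sqrtr0.
  have hl : 0 <= lam.
    by move: hg; rewrite /norminf big_ord0 => ?; lra.
  apply: mulr_ge0 => //; apply: mulr_ge0; last exact: sqrtr_ge0.
  by apply: divr_ge0 => //; lra.
move=> hk hQ0 hopt hg hre.
set Q := (v^T *m G *m v) 0 0 in hQ0 hopt hre *.
set S := [set i | bs i 0 != 0].
set A := \sum_(i | i \in S) `|v i 0|.
set B := \sum_(i | i \notin S) `|v i 0|.
have memS : forall i, (i \in S) = (bs i 0 != 0) by move=> i; apply/idP/idP; rewrite in_setE.
set N2 := \sum_i v i 0 ^+ 2.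
have hN2 : 0 <= N2 by apply: sumr_ge0 => i _; exact: sqr_ge0.
have hA : 0 <= A by apply: sumr_ge0.
have hB : 0 <= B by apply: sumr_ge0.
have h1 : norm1 v = A + B by rewrite /norm1 (bigID (fun i => i \in S)).
have hn2 : norm2 v ^+ 2 = N2 by rewrite /norm2 sqr_sqrtr.
have hdot : (v^T *m g) 0 0 <= (A + B) * (lam / 4).
  rewrite -h1; have hd := @dot_le _ _ v g. apply: (le_trans hd). apply: ler_wpM2l => //.
  by rewrite /norm1; apply: sumr_ge0.
have hdiff : B - A <= norm1 (bs + v) - norm1 bs.
  rewrite /norm1 -sumrB (bigID (fun i => i \in S)) /= /A /B.
  rewrite addrC -sumrN; apply: lerD; apply: ler_sum => i.
    rewrite memS negbK => /eqP hb. rewrite !mxE hb add0r normr0 subr0 //.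
  move=> _; rewrite mxE.
  have := ler_normD (bs i 0 + v i 0) (- v i 0); rewrite normrN addrK; lra.
have hk0 : 0 <= k by apply: le_trans hk.
have hAk : A ^+ 2 <= k * N2.
  have := @cs_sum _ _ (fun i => i \in S) (fun i => `|v i 0|) (fun _ => 1).
  under eq_bigr do rewrite mulr1.
  rewrite -/A sumr_const expr1n.
  have -> : \sum_(i | i \in S) `|v i 0| ^+ 2 = \sum_(i | i \in S) v i 0 ^+ 2.
    by apply: eq_bigr => i _; rewrite real_normK // num_real.
  move=> h; apply: (le_trans h).
  have hS : \sum_(i | i \in S) v i 0 ^+ 2 <= N2.
    rewrite /N2 [X in _ <= X](bigID (fun i => i \in S)) /= lerDl.
    by apply: sumr_ge0 => i _; exact: sqr_ge0.
  have hSn : (#|S|%:R : R) <= k by [].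
  rewrite mulrC; apply: ler_pM => //; first by apply: sumr_ge0 => i _; exact: sqr_ge0.
have hQ1 : Q <= lam / 2 * (A + B) - lam * (B - A).
  have : lam * (B - A) <= lam * (norm1 (bs + v) - norm1 bs).
    by apply: ler_wpM2l => //; lra.
  lra.
have hBA : B <= 3 * A.
  have : 0 <= lam * (3 * A - B) by lra.
  by rewrite pmulr_rge0 //; lra.
have hAB2 : (A + B) ^+ 2 <= 16 * (k * N2).
  have : (A + B) ^+ 2 <= (4 * A) ^+ 2.
    by rewrite ler_sqr ?nnegrE; lra.
  nra.
rewrite hn2 h1 in hre.
have hre2 : alpha / 2 * N2 <= Q.
  have : tau * (A + B) ^+ 2 <= tau * (16 * (k * N2)) by apply: ler_wpM2l.
  have : 16 * tau * k * N2 <= alpha / 2 * N2 by apply: ler_wpM2r => //; lra.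
  nra.
have hlB := mulr_ge0 (ltW hl) hB.
have h3 : alpha * N2 <= 3 * lam * A by nra.
have h4 : (alpha * N2) ^+ 2 <= 9 * lam ^+ 2 * (k * N2).
  have : (alpha * N2) ^+ 2 <= (3 * lam * A) ^+ 2.
    by rewrite ler_sqr ?nnegrE; [ | apply: mulr_ge0; lra | nra].
  nra.
have h5 : N2 <= (3 / alpha * Num.sqrt k * lam) ^+ 2.
  have -> : (3 / alpha * Num.sqrt k * lam) ^+ 2 = 9 * lam ^+ 2 * k / alpha ^+ 2.
    rewrite !exprMn sqr_sqrtr // exprVn; field; by rewrite gt_eqF.
  case: (eqVneq N2 0) => [-> | hne].
    apply: mulr_ge0; last by rewrite invr_ge0 sqr_ge0.
    by apply: mulr_ge0 => //; apply: mulr_ge0 => //; apply: sqr_ge0.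
  have hN2p : 0 < N2 by rewrite lt0r hne.
  rewrite ler_pdivlMr ?exprn_gt0 //.
  have : alpha ^+ 2 * N2 * N2 <= 9 * lam ^+ 2 * k * N2 by nra.
  by rewrite ler_pM2r //; lra.
rewrite -(@ler_sqr R) ?nnegrE ?hn2 //.
  by rewrite /norm2 sqrtr_ge0.
apply: mulr_ge0; last lra.
apply: mulr_ge0; last exact: sqrtr_ge0.
by apply: divr_ge0 => //; lra.
Qed.

Section Dot.
Variable R : realType.
Definition dot {n} (u w : 'cV[R]_n) : R := (u^T *m w) 0 0.

Lemma dotC n (u w : 'cV[R]_n) : dot u w = dot w u.
Proof. rewrite /dot; transitivity ((u^T *m w)^T 0 0); first by rewrite [RHS]mxE.
by rewrite trmx_mul trmxK. Qed.

Lemma dotDr n (u w1 w2 : 'cV[R]_n) : dot u (w1 + w2) = dot u w1 + dot u w2.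
Proof. by rewrite /dot mulmxDr mxE. Qed.
Lemma dotNr n (u w : 'cV[R]_n) : dot u (- w) = - dot u w.
Proof. by rewrite /dot mulmxN mxE. Qed.
Lemma dotZr n (u w : 'cV[R]_n) c : dot u (c *: w) = c * dot u w.
Proof. by rewrite /dot -scalemxAr mxE. Qed.
Lemma dotDl n (u1 u2 w : 'cV[R]_n) : dot (u1 + u2) w = dot u1 w + dot u2 w.
Proof. by rewrite dotC dotDr !(dotC w). Qed.
Lemma dotNl n (u w : 'cV[R]_n) : dot (- u) w = - dot u w.
Proof. by rewrite dotC dotNr dotC. Qed.
Lemma dotMl m n (A : 'M[R]_(m, n)) u w : dot (A *m u) w = dot u (A^T *m w).
Proof. by rewrite /dot trmx_mul mulmxA. Qed.
Lemma dot_sum n (u w : 'cV[R]_n) : dot u w = \sum_i u i 0 * w i 0.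
Proof. by rewrite /dot mxE; apply: eq_bigr => i _; rewrite mxE. Qed.
Lemma norm2_dot n (u : 'cV[R]_n) : norm2 u ^+ 2 = dot u u.
Proof.
rewrite /norm2 sqr_sqrtr; last by apply: sumr_ge0 => i _; exact: sqr_ge0.
by rewrite dot_sum; apply: eq_bigr => i _; rewrite expr2.
Qed.
Lemma dot_ge0 n (u : 'cV[R]_n) : 0 <= dot u u.
Proof. by rewrite -norm2_dot sqr_ge0. Qed.
End Dot.

Lemma quad_id (R : realType) a b N (Z : 'M[R]_(N, a)) (X : 'M[R]_(N, b)) lam
  (bs v : 'cV[R]_(a * b)) :
  lasso_obj Z X lam (bs + v) - lasso_obj Z X lam bs =
  (v^T *m Gamma_hat (q := a) X *m v) 0 0
  - 2 * (v^T *m (gamma_hat Z X - Gamma_hat (q := a) X *m bs)) 0 0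
  + lam * (norm1 (bs + v) - norm1 bs).
Proof.
set Xt := tensmx (1%:M : 'M[R]_a) X.
have hG : Gamma_hat (q := a) X = (N%:R)^-1 *: (Xt^T *m Xt).
  by rewrite /Gamma_hat /Xt trmx_tens trmx1 tensmx_mul mul1mx.
have hg : gamma_hat Z X = (N%:R)^-1 *: (Xt^T *m vecm Z).
  by rewrite /gamma_hat /Xt trmx_tens trmx1.
rewrite /lasso_obj !norm2_dot.
rewrite -mulmxA -/(dot v _) -/(dot v _) hG hg.
rewrite -!scalemxAl -scalerBr !dotZr dotDr dotNr -!mulmxA.
change (tensmx _ X) with Xt.
rewrite mulmxDr.
set z := vecm Z; set p := Xt *m v; set s := Xt *m bs.
rewrite dotDr dotNr -!dotMl -/p.
have e1 : dot v (Xt^T *m z) = dot p z by rewrite /p dotMl.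
have e2 : dot v (Xt^T *m s) = dot p s by rewrite /p dotMl.
rewrite [dot v (_ + _)]dotDr dotNr e1 e2.
rewrite !(dotDl, dotDr, dotNl, dotNr) (dotC z p) (dotC z s) (dotC s p).
ring.
Qed.


Lemma Q_ge0 (R : realType) a b N (X : 'M[R]_(N, b)) (v : 'cV[R]_(a * b)) :
  0 <= (v^T *m Gamma_hat (q := a) X *m v) 0 0.
Proof.
set Xt := tensmx (1%:M : 'M[R]_a) X.
have hG : Gamma_hat (q := a) X = (N%:R)^-1 *: (Xt^T *m Xt).
  by rewrite /Gamma_hat /Xt trmx_tens trmx1 tensmx_mul mul1mx.
rewrite hG -scalemxAr -scalemxAl mxE; apply: mulr_ge0; first by rewrite invr_ge0 ler0n.
rewrite mulmxA -trmx_mul -mulmxA -/(dot (Xt *m v) (Xt *m v)); exact: dot_ge0.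
Qed.

Lemma sum_mxvec (R : realType) m n (A : 'M[R]_(m, n)) (f : R -> R) :
  \sum_k f (mxvec A 0 k) = \sum_i \sum_j f (A i j).
Proof.
rewrite pair_big /= (reindex (uncurry (@mxvec_index m n))) /=.
  by apply: eq_bigr => -[i j] _; rewrite mxvecE.
exact: curry_mxvec_bij.
Qed.

Lemma norm2_vecm (R : realType) m n (D : 'M[R]_(m, n)) :
  norm2 (vecm D) = Num.sqrt (\sum_i \sum_j D i j ^+ 2).
Proof.
rewrite /norm2 /vecm; congr Num.sqrt.
under eq_bigr do rewrite mxE.
rewrite (sum_mxvec (D^T) (fun x => x ^+ 2)) exchange_big /=.
by apply: eq_bigr => i _; apply: eq_bigr => j _; rewrite mxE.
Qed.

Lemma spec_le (R : realType) m n (D : 'M[R]_(m, n)) :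
  0 <= spec_norm D /\ spec_norm D <= norm2 (vecm D).
Proof.
rewrite norm2_vecm.
set F := \sum_i \sum_j D i j ^+ 2.
set E := [set norm2 (D *m x) | x in [set x : 'cV[R]_n | norm2 x <= 1]].
have hub : forall y, E y -> y <= Num.sqrt F.
  move=> y [x hx <-]; rewrite /norm2; apply: ler_wsqrtr.
  have hx2 : \sum_j x j 0 ^+ 2 <= 1.
    have h0 : 0 <= \sum_j x j 0 ^+ 2 by apply: sumr_ge0 => j _; exact: sqr_ge0.
    move: hx; rewrite /= /norm2 -{1}sqrtr1 ler_sqrt //.
  rewrite /F; apply: ler_sum => i _; rewrite mxE.
  apply: (le_trans (cs_sum _ _ _)).
  rewrite -[X in _ <= X]mulr1; apply: ler_wpM2l => //.
  by apply: sumr_ge0 => j _; exact: sqr_ge0.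
have h0E : E (norm2 (D *m 0)).
  exists 0 => //=; rewrite /norm2 big1 ?sqrtr0 ?ler01 // => j _.
  by rewrite mxE expr0n.
split.
  have hb : has_ubound E by exists (Num.sqrt F).
  have hs := ub_le_sup hb; have h1 : norm2 (D *m 0) <= sup E by apply: hs.
  exact: le_trans (sqrtr_ge0 _) h1.

by apply: ge_sup => //; exists (norm2 (D *m 0)).
Qed.

Lemma vecmB (R : realType) m n (A B : 'M[R]_(m, n)) : vecm (A - B) = vecm A - vecm B.
Proof. by rewrite /vecm !linearB. Qed.

Theorem lemma4p6 (R : realType) (d : measure_display)
  (Omega : measurableType d) (P : probability Omega R)
  (bM bL : nat) (q : nat -> nat)
  (PhiS PhiM PhiL : forall T : nat, 'M[R]_(q T))
  (Y eps : forall T : nat, Omega -> int -> 'cV[R]_(q T))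
  (Phihat : forall T : nat, Omega -> 'M[R]_(q T + q T + q T, q T))
  (lam : nat -> R) (ell : nat -> nat) (alpha : R) (tau : nat -> R) :
  (1 < bM)%N -> (bM < bL)%N ->
  (* the generalized ScBM-VHAR model with white noise *)
  (forall T, white_noise P (eps T)) ->
  (forall T t i, measurable_fun setT (fun w => Y T w t i 0)) ->
  (forall T w, vhar_eq bM bL (PhiS T) (PhiM T) (PhiL T) (Y T w) (eps T w)) ->
  (* (S1), (S2) *)
  (forall T, cond_S1 bL (var_coef bM bL (PhiS T) (PhiM T) (PhiL T))) ->
  (forall T, cond_S2 bL (var_coef bM bL (PhiS T) (PhiM T) (PhiL T))) ->
  (* vec(Phihat) is the lasso estimator beta_hat_V *)
  (forall T w, (bL < T)%N ->
     is_lasso (Zmat (T - bL) bL (Y T w)) (Xe (T - bL) bM bL (Y T w))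
              (lam T) (vecm (Phihat T w))) ->
  (* (i) beta*_V = vec(B) is ell_V-sparse *)
  (forall T, (bL < T)%N ->
     (nnz (vecm (Bstack (PhiS T) (PhiM T) (PhiL T))) <= ell T)%N) ->
  (* (ii) restricted eigenvalue condition *)
  0 < alpha -> (forall T, 0 <= tau T) ->
  (forall T, (bL < T)%N -> 32 * tau T * (ell T)%:R <= alpha) ->
  (forall T w (theta : 'cV[R]_(q T * (q T + q T + q T))), (bL < T)%N ->
     alpha * norm2 theta ^+ 2 - tau T * norm1 theta ^+ 2
       <= (theta^T *m Gamma_hat (q := q T) (Xe (T - bL) bM bL (Y T w)) *m theta) 0 0) ->
  (* lambda_{N,V} asymp sqrt(log(s q)/N), s = 3 *)
  (exists c1 c2 : R, 0 < c1 /\ 0 < c2 /\ exists T0 : nat, forall T, (T0 <= T)%N ->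
     c1 * Num.sqrt (ln (3 * q T)%:R / (T - bL)%:R) <= lam T /\
     lam T <= c2 * Num.sqrt (ln (3 * q T)%:R / (T - bL)%:R)) ->
  (* (iii) deviation bound with probability tending to one *)
  wp_to_one P (fun T => [set w |
     norminf (gamma_hat (Zmat (T - bL) bL (Y T w)) (Xe (T - bL) bM bL (Y T w))
              - Gamma_hat (q := q T) (Xe (T - bL) bM bL (Y T w))
                  *m vecm (Bstack (PhiS T) (PhiM T) (PhiL T)))
       <= lam T / 4]) ->
  (* conclusion *)
  bigO_P P (fun T w => spec_norm (Phihat T w - Bstack (PhiS T) (PhiM T) (PhiL T)))
           (fun T => Num.sqrt (ell T)%:R * lam T) /\
  bigO_P P (fun T w => spec_norm (Phihat T w - Bstack (PhiS T) (PhiM T) (PhiL T)))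
           (fun T => Num.sqrt ((ell T)%:R * ln (3 * q T)%:R / (T - bL)%:R)).
Proof.
move=> hbM hbL _ _ _ _ _ hlasso hsparse ha htau htk hRE
  [c1 [c2 [hc1 [hc2 [Tl hlam]]]]] hwp.
have key : forall T w, (bL < T)%N -> (Tl <= T)%N ->
   norminf (gamma_hat (Zmat (T - bL) bL (Y T w)) (Xe (T - bL) bM bL (Y T w))
              - Gamma_hat (q := q T) (Xe (T - bL) bM bL (Y T w))
                  *m vecm (Bstack (PhiS T) (PhiM T) (PhiL T))) <= lam T / 4 ->
   spec_norm (Phihat T w - Bstack (PhiS T) (PhiM T) (PhiL T))
     <= 3 / alpha * Num.sqrt (ell T)%:R * lam T.
  move=> T w hT hTl hw.
  set Z := Zmat (T - bL) bL (Y T w) in hw *.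
  set X := Xe (T - bL) bM bL (Y T w) in hw *.
  set bs := vecm (Bstack (PhiS T) (PhiM T) (PhiL T)) in hw *.
  set bh := vecm (Phihat T w).
  set v := bh - bs.
  have hv : bs + v = bh by rewrite /v addrC subrK.
  have [_ hsp] := spec_le (Phihat T w - Bstack (PhiS T) (PhiM T) (PhiL T)).
  apply: (le_trans hsp); rewrite vecmB -/bh -/bs -/v.
  apply: (@core _ _ (Gamma_hat (q := q T) X) bs v
            (gamma_hat Z X - Gamma_hat (q := q T) X *m bs)) => //.
  - exact: htk.
  - case: (posnP (q T)) => [hq0 | hqp]; [right; by rewrite hq0 | left].
    have [h1 _] := hlam T hTl.
    apply: lt_le_trans h1; apply: mulr_gt0 => //.
    rewrite sqrtr_gt0; apply: divr_gt0.
      by apply: ln_gt0; rewrite ltr1n; lia.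
    by rewrite ltr0n subn_gt0.
  - by rewrite ler_nat; apply: hsparse.
  - exact: Q_ge0.
  - have hopt := hlasso T w hT bs.
    have hq := quad_id Z X (lam T) bs v.
    rewrite -/bh -hv -subr_le0 hq in hopt; exact: hopt.
  - exact: hRE.
have hge : forall T w, 0 <= spec_norm (Phihat T w - Bstack (PhiS T) (PhiM T) (PhiL T)).
  by move=> T w; have [] := spec_le (Phihat T w - Bstack (PhiS T) (PhiM T) (PhiL T)).
have ha3 : 0 < 3 / alpha by apply: divr_gt0.
split => e he; have [T1 hT1] := hwp e he.
- exists (3 / alpha); split => //.
  exists (maxn (maxn T1 Tl) bL.+1) => T hT.
  have hT1' : (T1 <= T)%N by move: hT; rewrite !geq_max => /andP[/andP[]].
  have hTl : (Tl <= T)%N by move: hT; rewrite !geq_max => /andP[/andP[]].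
  have hTb : (bL < T)%N by move: hT; rewrite !geq_max => /andP[_].
  have [E [mE sE PE]] := hT1 T hT1'.
  exists E; split => // w /sE hw /=.
  rewrite ger0_norm ?hge // mulrA; exact: key.
- exists (3 / alpha * c2); split; first by apply: mulr_gt0.
  exists (maxn (maxn T1 Tl) bL.+1) => T hT.
  have hT1' : (T1 <= T)%N by move: hT; rewrite !geq_max => /andP[/andP[]].
  have hTl : (Tl <= T)%N by move: hT; rewrite !geq_max => /andP[/andP[]].
  have hTb : (bL < T)%N by move: hT; rewrite !geq_max => /andP[_].
  have [E [mE sE PE]] := hT1 T hT1'.
  exists E; split => // w /sE hw /=.
  rewrite ger0_norm ?hge //.
  apply: (le_trans (key T w hTb hTl hw)).
  have [_ h2] := hlam T hTl.
  rewrite -!mulrA; apply: ler_wpM2l => //.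
  apply: ler_wpM2l; first by rewrite invr_ge0 ltW.
  rewrite sqrtrM ?ler0n // mulrCA; apply: ler_wpM2l; first exact: sqrtr_ge0.
  exact: h2.
Qed.
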